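(* Let $\{q_k:k\ge0\}$ be a non-decreasing sequence of nonnegative numbers with $q_0>0$, and let $N\in\mathbb N$ and $n\ge M_N$. Then there is a constant $c>0$ (independent of $n,N$) such that for all $x\in G_m$ $$\left|\frac1{Q_n}\sum_{j=M_N}^{n}q_{n-j}D_j(x)\right|\le\frac{c}{M_N}\sum_{j=0}^{|n|}M_j\,|K_{M_j}(x)|.$$
   Context: Let $m=(m_0,m_1,\dots)$ be a bounded sequence of integers $m_k\ge 2$; $G_m=\prod_k Z_{m_k}$; $M_0=1$, $M_{k+1}=m_kM_k$, $n=\sum_j n_jM_j$ with $n_j\in Z_{m_j}$. $r_k(x)=\exp(2\pi i x_k/m_k)$, $\psi_n=\prod_k r_k^{n_k}$, $D_n=\sum_{k=0}^{n-1}\psi_k$, $K_n=\frac1n\sum_{k=1}^nD_k$. $Q_n=\sum_{k=0}^{n-1}q_k$. For $n\in\mathbb N_+$, $|n|$ denotes the unique integer with $M_{|n|}\le n<M_{|n|+1}$. *)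

(* Defs.v *)
(* complex values in an arbitrary numClosedFieldType C
   (e.g. algC). *)
From HB Require Import structures.
From mathcomp Require Import all_boot all_order all_algebra.
Set Implicit Arguments. Unset Strict Implicit. Unset Printing Implicit Defensive.
Import Order.TTheory GRing.Theory Num.Theory.
Local Open Scope ring_scope.

Definition Mseq (m : nat -> nat) (k : nat) : nat := (\prod_(i < k) m i)%N.

Definition digit (m : nat -> nat) (n j : nat) : nat := ((n %/ Mseq m j) %% m j)%N.

(* exp(2 pi i / p): the p-th root of -1 with minimal nonnegative argument
   is exp(i pi / p); its square is exp(2 pi i / p). *)
Definition omega (C : numClosedFieldType) (p : nat) : C := (p.-root (-1)) ^+ 2.

(* r_k(x) = exp(2 pi i x_k / m_k), x : G_m encoded as a digit sequence *)
Definition rad (C : numClosedFieldType) (m x : nat -> nat) (k : nat) : C :=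
  omega C (m k) ^+ x k.

(* psi_n = prod_k r_k^{n_k}; digits n_k vanish for k >= n since M_k >= 2^k > n *)
Definition psi (C : numClosedFieldType) (m x : nat -> nat) (n : nat) : C :=
  \prod_(k < n) rad C m x k ^+ digit m n k.

Definition Dir (C : numClosedFieldType) (m x : nat -> nat) (n : nat) : C :=
  \sum_(k < n) psi C m x k.

Definition Fej (C : numClosedFieldType) (m x : nat -> nat) (n : nat) : C :=
  n%:R^-1 * \sum_(1 <= k < n.+1) Dir C m x k.

Definition Qsum (C : numClosedFieldType) (q : nat -> C) (n : nat) : C :=
  \sum_(k < n) q k.

(* |n| : the (unique, for n >= 1) k with M_k <= n < M_(k+1), i.e. the largest
   k with M_k <= n (such k are < n.+1 since M_k >= 2^k) *)
Definition vabs (m : nat -> nat) (n : nat) : nat :=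
  (\max_(k < n.+1 | Mseq m k <= n) k)%N.

(* Main.v *)
Require Import Defs.
From HB Require Import structures.
From mathcomp Require Import all_boot all_order all_algebra.
From mathcomp Require Import zify ring.
Import Order.TTheory GRing.Theory Num.Theory.
Local Open Scope ring_scope.

Section Aux.
Variable (m : nat -> nat).
Hypothesis hm2 : forall k, (2 <= m k)%N.

Lemma MseqS k : Mseq m k.+1 = (Mseq m k * m k)%N.
Proof. by rewrite /Mseq big_ord_recr. Qed.

Lemma Mseq_gt0 k : (0 < Mseq m k)%N.
Proof.
elim: k => [|k IH]; first by rewrite /Mseq big_ord0.
rewrite MseqS muln_gt0 IH /=. by have := hm2 k; lia.
Qed.

Lemma Mseq_ge k : (k < Mseq m k)%N.
Proof.
elim: k => [|k IH]; first by rewrite /Mseq big_ord0.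
rewrite MseqS. have := hm2 k. nia.
Qed.

Lemma Mseq_dvd s k : (s <= k)%N -> exists P, Mseq m k = (Mseq m s * P)%N.
Proof.
elim: k => [|k IH] hle.
  have -> : s = 0%N by lia. by exists 1%N; rewrite muln1.
move: hle; rewrite leq_eqVlt => /orP [/eqP <- | hlt]; first by exists 1%N; rewrite muln1.
have [P HP] := IH hlt. exists (P * m k)%N. by rewrite MseqS HP mulnA.
Qed.

Lemma Mseq_mono s k : (s <= k)%N -> (Mseq m s <= Mseq m k)%N.
Proof.
move=> /Mseq_dvd [P HP]. have := Mseq_gt0 k. rewrite HP.
case: P {HP} => [|P]; first by rewrite muln0.
move=> _. by rewrite leq_pmulr.
Qed.

Lemma Mseq_dvd_lt k s : (k < s)%N -> exists P, Mseq m s = (Mseq m k * m k * P)%N.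
Proof. move=> /Mseq_dvd [P HP]. exists P. by rewrite HP MseqS. Qed.

Lemma dig_low t s k : (k < s)%N -> digit m (t * Mseq m s) k = 0%N.
Proof.
move=> /Mseq_dvd_lt [P HP]. rewrite /digit HP.
have -> : (t * (Mseq m k * m k * P) = (t * m k * P) * Mseq m k)%N by nia.
rewrite mulnK ?Mseq_gt0 //.
have -> : (t * m k * P = (t * P) * m k)%N by nia.
by rewrite modnMl.
Qed.

Lemma dig_big n k : (n < Mseq m k)%N -> digit m n k = 0%N.
Proof. move=> h. by rewrite /digit (divn_small h) mod0n. Qed.

Lemma dig_add t s i k : (i < Mseq m s)%N ->
  digit m (t * Mseq m s + i) k = (digit m (t * Mseq m s) k + digit m i k)%N.
Proof.
move=> hi. case: (ltnP k s) => hks.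
  rewrite dig_low // add0n. have [P HP] := Mseq_dvd_lt _ _ hks.
  rewrite /digit HP.
  have -> : (t * (Mseq m k * m k * P) = (t * m k * P) * Mseq m k)%N by nia.
  rewrite divnMDl ?Mseq_gt0 //.
  have -> : (t * m k * P = (t * P) * m k)%N by nia.
  by rewrite modnMDl.
have hik : (i < Mseq m k)%N by apply: (leq_trans hi); apply: Mseq_mono.
rewrite (dig_big _ _ hik) addn0. have [P HP] := Mseq_dvd _ _ hks.
rewrite /digit HP !divnMA divnMDl ?Mseq_gt0 // mulnK ?Mseq_gt0 //.
by rewrite (divn_small hi) addn0.
Qed.

End Aux.

Section Psi.
Variable (C : numClosedFieldType) (m : nat -> nat) (x : nat -> nat).
Hypothesis hm2 : forall k, (2 <= m k)%N.

Definition psiK n K := \prod_(k < K) Defs.rad C m x k ^+ digit m n k.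

Lemma psiK_ext n K K' : (n < Mseq m K)%N -> (K <= K')%N -> psiK n K' = psiK n K.
Proof.
move=> hn. elim: K' => [|K' IH] hle.
  by have -> : K = 0%N by lia.
move: hle; rewrite leq_eqVlt => /orP [/eqP -> // | hlt].
rewrite /psiK big_ord_recr /= -/(psiK n K') IH //.
rewrite dig_big ?expr0 ?mulr1 //.
apply: (leq_trans hn); apply: Mseq_mono => //.
Qed.

Lemma psiE n K : (n < Mseq m K)%N -> psi C m x n = psiK n K.
Proof.
move=> hn. have -> : psi C m x n = psiK n n by [].
rewrite -(@psiK_ext n n (maxn n K)) ?leq_maxl ?Mseq_ge //.
by rewrite (@psiK_ext n K (maxn n K)) // leq_maxr.
Qed.

Lemma psi_add t s i : (i < Mseq m s)%N ->
  psi C m x (t * Mseq m s + i) = psi C m x (t * Mseq m s) * psi C m x i.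
Proof.
move=> hi. set K := (t * Mseq m s + i)%N.
have hK : (K < Mseq m K)%N by apply: Mseq_ge.
rewrite !(@psiE _ K) //; last 2 first.
- by apply: leq_ltn_trans hK; rewrite /K leq_addl.
- by apply: leq_ltn_trans hK; rewrite /K leq_addr.
rewrite /psiK -big_split /=. apply: eq_bigr => k _.
by rewrite dig_add // exprD.
Qed.

Lemma psi_uM u s : (u < m s)%N -> psi C m x (u * Mseq m s) = Defs.rad C m x s ^+ u.
Proof.
move=> hu. rewrite (@psiE _ s.+1); last first.
  rewrite MseqS mulnC ltn_pmul2l //. exact: Mseq_gt0.
rewrite /psiK big_ord_recr /= big1 ?mul1r; last first.
  by move=> k _; rewrite dig_low // expr0.
by rewrite /digit mulnK ?Mseq_gt0 // modn_small.
Qed.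

Lemma omega_m p : (0 < p)%N -> omega C p ^+ p = 1.
Proof.
move=> hp. by rewrite /omega exprAC rootCK // sqrrN expr1n.
Qed.

Lemma norm_omega p : (0 < p)%N -> `|omega C p| = 1.
Proof.
move=> hp. by rewrite /omega normrX norm_rootC normrN1 rootC1 // expr1n.
Qed.

Lemma rad_m k : Defs.rad C m x k ^+ m k = 1.
Proof.
have hp : (0 < m k)%N by have := hm2 k; lia.
by rewrite /rad exprAC omega_m // expr1n.
Qed.

Lemma norm_rad k : `|Defs.rad C m x k| = 1.
Proof.
have hp : (0 < m k)%N by have := hm2 k; lia.
by rewrite /rad normrX norm_omega // expr1n.
Qed.

Lemma norm_psi n : `|psi C m x n| = 1.
Proof.
rewrite /psi. apply: (big_ind (fun z : C => `|z| = 1)).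
- by rewrite normr1.
- by move=> a b ha hb; rewrite normrM ha hb mulr1.
- by move=> k _; rewrite normrX norm_rad expr1n.
Qed.

End Psi.

Section Dirs.
Variable (C : numClosedFieldType) (m : nat -> nat) (x : nat -> nat).
Hypothesis hm2 : forall k, (2 <= m k)%N.
Local Notation D := (Dir C m x).
Local Notation ps := (psi C m x).
Local Notation M := (Mseq m).

Definition Tn n := \sum_(1 <= k < n.+1) D k.

Lemma Dir0 : D 0 = 0.
Proof. by rewrite /Dir big_ord0. Qed.

Lemma Dir_add t s i : (i <= M s)%N ->
  D (t * M s + i) = D (t * M s) + ps (t * M s) * D i.
Proof.
move=> hi. rewrite /Dir big_split_ord /=. congr (_ + _).
rewrite mulr_sumr. apply: eq_bigr => k _. rewrite psi_add //.
exact: leq_trans (ltn_ord k) hi.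
Qed.

Lemma Tn_add t s i : (i <= M s)%N ->
  Tn (t * M s + i) = Tn (t * M s) + i%:R * D (t * M s) + ps (t * M s) * Tn i.
Proof.
move=> hi. set a := (t * M s)%N.
rewrite /Tn (@big_cat_nat _ _ _ a.+1) //=; last by lia.
rewrite -addrA; congr (_ + _).
have -> : a.+1 = (1 + a)%N by lia.
rewrite big_addn.
have -> : ((a + i).+1 - a = i.+1)%N by lia.
rewrite (@eq_big_nat _ _ _ _ _ _ (fun k => D a + ps a * D k)); last first.
  move=> k hk. rewrite addnC Dir_add //. by lia.
rewrite big_split /= sumr_const_nat -mulr_sumr mulr_natl.
by have -> : (i.+1 - 1 = i)%N by lia.
Qed.

Lemma Dir_T L : (0 < L)%N -> D L = Tn L - Tn L.-1.
Proof.
move=> hL. rewrite /Tn big_nat_recr //= prednK //. by rewrite addrC addrK.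
Qed.

Lemma Tn_Fej n : (0 < n)%N -> `|Tn n| = n%:R * `|Fej C m x n|.
Proof.
move=> hn. rewrite /Fej normrM normfV normr_nat mulrA mulfV ?mul1r //.
by rewrite pnatr_eq0 -lt0n.
Qed.

Lemma geom (r : C) p : r ^+ p = 1 -> r != 1 -> \sum_(u < p) r ^+ u = 0.
Proof.
move=> hp hr.
have : (1 - r) * \sum_(u < p) r ^+ u = 1 - r ^+ p.
  elim: p {hp} => [|p IH]; first by rewrite big_ord0 expr0 mulr0 subrr.
  rewrite big_ord_recr /= mulrDr IH exprS. ring.
rewrite hp subrr => /eqP. rewrite mulf_eq0 subr_eq0 eq_sym (negbTE hr) /=.
by move/eqP.
Qed.

Lemma Dir_mulM t s : D (t * M s) = D (M s) * \sum_(u < t) ps (u * M s).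
Proof.
elim: t => [|t IH]; first by rewrite mul0n Dir0 big_ord0 mulr0.
rewrite mulSnr Dir_add // IH big_ord_recr /=. ring.
Qed.

Lemma DirM_cases s : D (M s) = 0 \/ (forall k, (k < M s)%N -> ps k = 1).
Proof.
elim: s => [|s IH].
  right=> k. rewrite /Mseq big_ord0 ltnS leqn0 => /eqP ->.
  by rewrite /psi big_ord0.
have e : M s.+1 = (m s * M s)%N by rewrite MseqS mulnC.
case: IH => [h0 | h1].
  by left; rewrite e Dir_mulM h0 mul0r.
have [hr | hr] := eqVneq (Defs.rad C m x s) 1; last first.
  left. rewrite e Dir_mulM (@eq_bigr _ _ _ _ _ _ _ (fun u : 'I_(m s) => Defs.rad C m x s ^+ u)).
    by rewrite geom ?mulr0 // rad_m.
  by move=> u _; rewrite psi_uM.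
right=> k hk. rewrite (divn_eq k (M s)) psi_add ?ltn_mod ?Mseq_gt0 //.
rewrite psi_uM ?hr ?expr1n ?mul1r; last by rewrite ltn_divLR ?Mseq_gt0 // -e.
by apply: h1; rewrite ltn_mod Mseq_gt0.
exact: hm2.
Qed.

End Dirs.

Lemma eq_le' (R : numDomainType) (a b : R) : a = b -> a <= b.
Proof. by move->. Qed.

Section Bounds.
Variable (C : numClosedFieldType) (m : nat -> nat) (x : nat -> nat).
Hypothesis hm2 : forall k, (2 <= m k)%N.
Local Notation D := (Dir C m x).
Local Notation ps := (psi C m x).
Local Notation M := (Mseq m).
Local Notation T := (Tn C m x).

Lemma allone_Dir M0 j : (forall k, (k < M0)%N -> ps k = 1) -> (j <= M0)%N -> D j = j%:R.
Proof.
move=> h hj. rewrite /Dir (eq_bigr (fun _ => 1)).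
  by rewrite sumr_const card_ord.
move=> k _; apply: h. exact: leq_trans (ltn_ord k) hj.
Qed.

Lemma nat_tri M0 : (M0 * M0 <= 2 * \sum_(1 <= k < M0.+1) k)%N.
Proof.
elim: M0 => [|M0 IH]; first by [].
rewrite big_nat_recr //=. nia.
Qed.

Lemma DM_bound s : (M s)%:R * `|D (M s)| <= 2%:R * `|T (M s)|.
Proof.
case: (DirM_cases C m x hm2 s) => [->|h].
  by rewrite normr0 mulr0 mulr_ge0 ?ler0n.
rewrite (@allone_Dir (M s) (M s) h) // normr_nat /Tn.
rewrite (@eq_big_nat _ _ _ _ _ _ (fun k => k%:R)); last first.
  move=> k hk. apply: (@allone_Dir (M s) k h). lia.
by rewrite -natr_sum normr_nat -!natrM ler_nat nat_tri.
Qed.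

Lemma DtM t s : (M s)%:R * `|D (t * M s)| <= 2%:R * t%:R * `|T (M s)|.
Proof.
elim: t => [|t IH].
  by rewrite mul0n Dir0 normr0 mulr0 mulr0 mul0r.
rewrite mulSnr (@Dir_add C m x hm2 t s (M s)) //.
apply: le_trans (ler_wpM2l (ler0n _ _) (ler_normD _ _)) _.
rewrite normrM norm_psi // mul1r mulrDr.
apply: le_trans (lerD IH (DM_bound s)) _.
apply: eq_le'. rewrite -addn1 natrD. ring.
Qed.

Lemma TtM t s : `|T (t * M s)| <= (3 * t * t)%:R * `|T (M s)|.
Proof.
elim: t => [|t IH].
  by rewrite mul0n /Tn big_geq // normr0 mul0n mul0r.
rewrite mulSnr (@Tn_add C m x hm2 t s (M s)) //.
apply: le_trans (ler_normD _ _) _.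
apply: le_trans (lerD (ler_normD _ _) (lexx _)) _.
rewrite !normrM norm_psi // mul1r normr_nat.
apply: le_trans (lerD (lerD IH (DtM t s)) (lexx _)) _.
have -> : (3 * t * t)%:R * `|T (M s)| + 2%:R * t%:R * `|T (M s)| + `|T (M s)|
   = (3 * t * t + 2 * t + 1)%:R * `|T (M s)| by rewrite !natrD !natrM; ring.
apply: ler_wpM2r; first exact: normr_ge0.
rewrite ler_nat. nia.
Qed.

Lemma Tn_bound B : (forall k, (m k <= B)%N) -> forall s n, (n < M s)%N ->
  `|T n| <= (3 * B * B + 2 * B + 1)%:R * \sum_(l < s) `|T (M l)|.
Proof.
move=> hB. elim=> [|s IH] n hn.
  have -> : n = 0%N by move: hn; rewrite /Mseq big_ord0; lia.
  by rewrite /Tn big_geq // normr0 big_ord0 mulr0.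
have hM := @Mseq_gt0 m hm2 s.
rewrite (divn_eq n (M s)).
set t := (n %/ M s)%N. set r := (n %% M s)%N.
have hr : (r < M s)%N by rewrite ltn_mod.
have ht : (t < m s)%N by rewrite ltn_divLR // -[(m s * M s)%N]mulnC -MseqS.
rewrite (@Tn_add C m x hm2 t s r); last exact: ltnW.
apply: le_trans (ler_normD _ _) _.
apply: le_trans (lerD (ler_normD _ _) (lexx _)) _.
rewrite !normrM norm_psi // mul1r normr_nat.
have h1 : r%:R * `|D (t * M s)| <= 2%:R * t%:R * `|T (M s)|.
  apply: le_trans (DtM t s). apply: ler_wpM2r; first exact: normr_ge0.
  by rewrite ler_nat ltnW.
apply: le_trans (lerD (lerD (TtM t s) h1) (IH r hr)) _.
rewrite big_ord_recr /= mulrDr addrC.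
apply: lerD; first exact: lexx.
have -> : (3 * t * t)%:R * `|T (M s)| + 2%:R * t%:R * `|T (M s)|
   = (3 * t * t + 2 * t)%:R * `|T (M s)| by rewrite !natrD !natrM; ring.
apply: ler_wpM2r; first exact: normr_ge0.
have htB : (t <= B)%N by have := hB s; lia.
have h3 : (3 * t * t <= 3 * B * B)%N by rewrite leq_mul // leq_mul.
have h4 : (2 * t <= 2 * B)%N by rewrite leq_mul.
rewrite ler_nat. lia.
Qed.

End Bounds.

Lemma vabs_lt (m : nat -> nat) (hm2 : forall k, (2 <= m k)%N) n :
  (n < Mseq m (vabs m n).+1)%N.
Proof.
rewrite ltnNge; apply/negP => hle.
have hv1 : ((vabs m n).+1 < n.+1)%N.
  by apply: leq_trans (@Mseq_ge m hm2 (vabs m n).+1) _; apply: leqW.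
have : ((vabs m n).+1 <= vabs m n)%N.
  exact: (@leq_bigmax_cond _ (fun k : 'I_n.+1 => (Mseq m k <= n)%N)
            (fun k => nat_of_ord k) (Ordinal hv1) hle).
by rewrite ltnn.
Qed.

Lemma q_mono (C : numClosedFieldType) (q : nat -> C)
  (hqmono : forall k, q k <= q k.+1) i j : (i <= j)%N -> q i <= q j.
Proof.
elim: j => [|j IH] hij; first by have -> : i = 0%N by lia.
move: hij; rewrite leq_eqVlt => /orP [/eqP -> // | hlt].
exact: le_trans (IH hlt) (hqmono j).
Qed.

Theorem mainTheorem5 (C : numClosedFieldType) (m : nat -> nat)
  (hm2 : forall k, (2 <= m k)%N)
  (hmb : exists B : nat, forall k, (m k <= B)%N)
  (q : nat -> C)
  (hq0 : 0 < q 0%N)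
  (hqnn : forall k, 0 <= q k)
  (hqmono : forall k, q k <= q k.+1) :
  exists c : C, 0 < c /\
    forall (N n : nat) (x : nat -> nat),
      (Mseq m N <= n)%N ->
      (forall k, (x k < m k)%N) ->
      `| (Qsum q n)^-1 * \sum_(Mseq m N <= j < n.+1) q (n - j)%N * Dir C m x j |
        <= c / (Mseq m N)%:R *
           \sum_(j < (vabs m n).+1) (Mseq m j)%:R * `| Fej C m x (Mseq m j) |.
Proof.
have [B hB] := hmb.
set c0 := ((3 * B * B + 2 * B + 1)%:R : C).
have hc0 : 0 < c0 by rewrite ltr0n; lia.
exists (2%:R * c0); split; first by rewrite mulr_gt0 // ltr0n.
move=> N n x hMn _.
set a := Mseq m N.
have ha : (0 < a)%N by apply: Mseq_gt0.
have hn : (0 < n)%N by lia.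
set v := vabs m n.
set S := \sum_(j < v.+1) `|Tn C m x (Mseq m j)|.
have eS : \sum_(j < v.+1) (Mseq m j)%:R * `| Fej C m x (Mseq m j) | = S.
  by apply: eq_bigr => j _; rewrite Tn_Fej // Mseq_gt0.
rewrite eS.
set X := c0 * S.
have hS : 0 <= S by apply: sumr_ge0 => j _; apply: normr_ge0.
have hX : 0 <= X by rewrite mulr_ge0 // ltW.
have hT : forall j, (j <= n)%N -> `|Tn C m x j| <= X.
  move=> j hj. apply: (@Tn_bound C m x hm2 B hB v.+1 j).
  exact: leq_ltn_trans hj (@vabs_lt m hm2 n).
set R := fun L => \sum_(L <= j < n.+1) q (n - j)%N * Dir C m x j.
have hE : forall d L, (n - L = d)%N -> (0 < L)%N -> (L <= n)%N ->
    `|R L - q 0%N * Tn C m x n + q (n - L)%N * Tn C m x L.-1|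
      <= (q (n - L)%N - q 0%N) * X.
  elim=> [|d IH] L hd hL0 hLn.
    have eL : L = n by lia.
    rewrite /R eL subnn big_nat1 subnn (@Dir_T C m x _ hn).
    have -> : q 0%N * (Tn C m x n - Tn C m x n.-1) - q 0%N * Tn C m x n
       + q 0%N * Tn C m x n.-1 = 0 by ring.
    by rewrite normr0 subrr mul0r.
  have hLn' : (L < n)%N by lia.
  have e1 : (n - L = (n - L.+1).+1)%N by lia.
  have hIH := IH L.+1 ltac:(lia) ltac:(lia) hLn'.
  rewrite /= in hIH.
  have hR : R L = q (n - L)%N * Dir C m x L + R L.+1.
    by rewrite /R big_ltn // ltnS ltnW.
  rewrite hR (@Dir_T C m x _ hL0).
  have -> : q (n - L)%N * (Tn C m x L - Tn C m x L.-1) + R L.+1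
      - q 0%N * Tn C m x n + q (n - L)%N * Tn C m x L.-1
    = (R L.+1 - q 0%N * Tn C m x n + q (n - L.+1)%N * Tn C m x L)
      + (q (n - L)%N - q (n - L.+1)%N) * Tn C m x L by ring.
  have he : 0 <= q (n - L)%N - q (n - L.+1)%N by rewrite subr_ge0 e1 hqmono.
  apply: le_trans (ler_normD _ _) _.
  apply: le_trans (lerD hIH (lexx _)) _.
  rewrite normrM (ger0_norm he).
  apply: le_trans (lerD (lexx _) (ler_wpM2l he (hT L (ltnW hLn')))) _.
  apply: eq_le'. ring.
have hEa := hE (n - a)%N a erefl ha hMn.
have hRa : `|R a| <= 2%:R * q (n - a)%N * X.
  have -> : R a = (R a - q 0%N * Tn C m x n + q (n - a)%N * Tn C m x a.-1)
     + q 0%N * Tn C m x n - q (n - a)%N * Tn C m x a.-1 by ring.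
  apply: le_trans (ler_normB _ _) _.
  apply: le_trans (lerD (ler_normD _ _) (lexx _)) _.
  rewrite !normrM (ger0_norm (hqnn 0%N)) (ger0_norm (hqnn (n - a)%N)).
  have h1 := ler_wpM2l (ltW hq0) (hT n (leqnn n)).
  have h2 := ler_wpM2l (hqnn (n - a)%N) (hT a.-1 ltac:(lia)).
  apply: le_trans (lerD (lerD hEa h1) h2) _.
  apply: eq_le'. ring.
have hQ : a%:R * q (n - a)%N <= Qsum q n.
  rewrite /Qsum -(big_mkord xpredT q) (@big_cat_nat _ _ _ (n - a)%N) //=; last by lia.
  rewrite -[X in X <= _]add0r. apply: lerD.
    by apply: sumr_ge0 => k _; apply: hqnn.
  have -> : a%:R * q (n - a)%N = \sum_(n - a <= k < n) q (n - a)%N.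
    by rewrite sumr_const_nat mulr_natl; congr (_ *+ _); lia.
  apply: ler_sum_nat => k hk. apply: q_mono => //. lia.
have hqa : 0 < q (n - a)%N by apply: lt_le_trans hq0 (@q_mono C q hqmono _ _ (leq0n _)).
have hQ0 : 0 < Qsum q n by apply: lt_le_trans hQ; rewrite mulr_gt0 // ltr0n.
rewrite normrM normfV (ger0_norm (ltW hQ0)) mulrC ler_pdivrMr //.
apply: le_trans hRa _.
have ha0 : a%:R != 0 :> C by rewrite pnatr_eq0 -lt0n.
have -> : 2%:R * q (n - a)%N * X = 2%:R * c0 / a%:R * S * (a%:R * q (n - a)%N).
  rewrite /X. field. exact: ha0.
apply: ler_wpM2l => //.
by rewrite !mulr_ge0 ?invr_ge0 ?ler0n // ltW.
Qed.
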